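(* Let $q\in K$. The linear map $\theta_q:\mathcal{H}_{\mathbb{T}}\to\mathcal{H}_{\mathcal{SP}}$, $\theta_q(\mathcal{T})=q^{c(\mathcal{T})}\,\overline{\mathcal{T}}$, is a surjective morphism of Hopf 2-associative algebras; that is, $\theta_q$ is surjective, $\theta_q(1)=1$, $\theta_q(x.y)=\theta_q(x).\theta_q(y)$, $\theta_q(x\downarrow y)=\theta_q(x)\downarrow\theta_q(y)$, and $\Delta\circ\theta_q=(\theta_q\otimes\theta_q)\circ\Delta$.
   Context: Let $K$ be a field. For $n\geq0$, $[n]=\{1,\ldots,n\}$, $\mathbb{T}_n$ is the set of topologies on $[n]$ and $\mathcal{H}_{\mathbb{T}}$ is the $K$-vector space with basis $\bigsqcup_n\mathbb{T}_n$; $1$ denotes the empty topology. For a topology $\mathcal{T}$ on finite $X$: $i\leq_{\mathcal{T}}j$ iff every open set containing $i$ contains $j$ (the open sets are exactly the subsets $I$ with $i\in I, i\leq_{\mathcal{T}}j\Rightarrow j\in I$); $i\sim_{\mathcal{T}}j$ iff $i\leq_{\mathcal{T}}j$ and $j\leq_{\mathcal{T}}i$. For $Y\subseteq X$, $\mathcal{T}_{\mid Y}=\{O\cap Y\mid O\in\mathcal{T}\}$; if $X$ is totally ordered of size $m$, $\mathrm{Std}(\mathcal{T})\in\mathbb{T}_m$ is the transport of $\mathcal{T}$ along the increasing bijection $X\to[m]$. For $O\subseteq\mathbb{N}$, $O(+n)=\{k+n\mid k\in O\}$. Products on $\mathcal{H}_{\mathbb{T}}$ (bilinear): for $\mathcal{T}\in\mathbb{T}_n,\mathcal{T}'\in\mathbb{T}_{n'}$,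 $\mathcal{T}.\mathcal{T}'$ has open sets $O\sqcup O'(+n)$, and $\mathcal{T}\downarrow\mathcal{T}'$ has open sets $O\sqcup[n'](+n)$ and $O'(+n)$ ($O\in\mathcal{T},O'\in\mathcal{T}'$). Coproduct: $\Delta(\mathcal{T})=\sum_{O\in\mathcal{T}}\mathrm{Std}(\mathcal{T}_{\mid[n]\setminus O})\otimes\mathrm{Std}(\mathcal{T}_{\mid O})$. A topology is $T_0$ if $\sim_{\mathcal{T}}$ is equality. $\mathcal{H}_{\mathcal{SP}}$ is the subspace of $\mathcal{H}_{\mathbb{T}}$ spanned by $T_0$ topologies; it is stable under $.$, $\downarrow$ and $\Delta$. For $\mathcal{T}\in\mathbb{T}_n$ with $\sim_{\mathcal{T}}$-classes $C_1,\ldots,C_k$ numbered so that $\min C_1<\cdots<\min C_k$, $\overline{\mathcal{T}}$ is the $T_0$ topology on $[k]$ whose preorder is $a\leq b$ iff $x\leq_{\mathcal{T}}y$ for $x\in C_a,y\in C_b$; and $c(\mathcal{T})=n-k$. Convention $q^0=1$ (also for $q=0$). *)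

(* Defs.v *)
(* topologies on [n] = 'I_n (elements 0..n-1 stand for 1..n),
   H_T modelled as the free K-module {malg K[TopT]} on the set TopT of all
   finite topologies on all [n]; H_T (x) H_T as the free module on TopT * TopT. *)
From HB Require Import structures.
From mathcomp Require Import all_boot all_order all_algebra.
From mathcomp Require Import finmap.
From mathcomp.multinomials Require Import monalg.
Unset Strict Implicit. Unset Printing Implicit Defensive.
Import GRing.Theory.
Local Open Scope ring_scope.

Definition is_topology {n} (F : {set {set 'I_n}}) : bool :=
  [&& set0 \in F, setT \in F,
      [forall O1 in F, forall O2 in F, O1 :|: O2 \in F] &
      [forall O1 in F, forall O2 in F, O1 :&: O2 \in F]].

Definition top n := {F : {set {set 'I_n}} | is_topology F}.

Lemma discrete_is_topology n : is_topology [set: {set 'I_n}].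
Proof. by apply/and4P; split; [rewrite inE|rewrite inE|apply/forall_inP=> *; apply/forall_inP=> *; rewrite inE ..]. Qed.

Definition mk_top {n} (F : {set {set 'I_n}}) : top n :=
  match boolP (is_topology F) with
  | AltTrue h => exist (fun G => is_topology G) F h
  | AltFalse _ => exist (fun G => is_topology G) _ (discrete_is_topology n)
  end.

Definition TopT := {n : nat & top n}.
Definition mkT {n} (F : {set {set 'I_n}}) : TopT := Tagged top (mk_top F).

Definition opens (t : TopT) : {set {set 'I_(tag t)}} := val (tagged t).

Definition tle (t : TopT) (i j : 'I_(tag t)) : bool :=
  [forall O in opens t, (i \in O) ==> (j \in O)].
Definition tequiv (t : TopT) (i j : 'I_(tag t)) : bool := tle t i j && tle t j i.
Definition T0 (t : TopT) : bool := [forall i, forall j, tequiv t i j ==> (i == j)].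

(* The empty topology on [0]: the unit 1. *)
Definition top_empty : TopT := @mkT 0 [set set0].

Definition tdot (t t' : TopT) : TopT :=
  @mkT (tag t + tag t')
    [set [set lshift (tag t') i | i in O] :|: [set rshift (tag t) j | j in O']
       | O : {set 'I_(tag t)} in opens t, O' : {set 'I_(tag t')} in opens t'].

Definition tdown (t t' : TopT) : TopT :=
  @mkT (tag t + tag t')
    ([set [set lshift (tag t') i | i in O] :|: [set rshift (tag t) j | j : 'I_(tag t')]
       | O : {set 'I_(tag t)} in opens t] :|:
     [set [set rshift (tag t) j | j in O'] | O' : {set 'I_(tag t')} in opens t']).

(* Std(T_|Y): transport of the restriction along the increasing bijection
   Y -> [#|Y|] (enum_val enumerates Y in increasing order). *)
Definition std_restr (t : TopT) (Y : {set 'I_(tag t)}) : TopT :=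
  @mkT #|Y| [set [set i : 'I_#|Y| | enum_val i \in O] | O : {set 'I_(tag t)} in opens t].

(* the minima of the ~_T classes, enumerated increasingly: numbering
   C_1,...,C_k with min C_1 < ... < min C_k *)
Definition class_mins (t : TopT) : {set 'I_(tag t)} :=
  [set i | [forall j, tequiv t i j ==> (nat_of_ord i <= nat_of_ord j)%N]].

Definition nclasses (t : TopT) : nat := #|class_mins t|.
Definition cT (t : TopT) : nat := (tag t - nclasses t)%N.

(* \overline{T}: the topology on [k] whose opens are the up-sets of the
   preorder a <= b iff x <=_T y for x in C_a, y in C_b (C_a represented by
   its minimum). *)
Definition tbar (t : TopT) : TopT :=
  @mkT (nclasses t)
    [set I : {set 'I_(nclasses t)} |
       [forall a, forall b,
          ((a \in I) && tle t (enum_val a) (enum_val b)) ==> (b \in I)]].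

Section Algebra.
Variable K : fieldType.

Definition HT := {malg K[TopT]}.
Definition HT2 := {malg K[(TopT * TopT)%type]}.

Definition in_HSP (x : HT) : Prop := forall t, t \in msupp x -> T0 t.

Definition hdot (x y : HT) : HT :=
  \sum_(s <- msupp x) \sum_(t <- msupp y) << x@_s * y@_t *g tdot s t >>.
Definition hdown (x y : HT) : HT :=
  \sum_(s <- msupp x) \sum_(t <- msupp y) << x@_s * y@_t *g tdown s t >>.

Definition htens (x y : HT) : HT2 :=
  \sum_(s <- msupp x) \sum_(t <- msupp y) << x@_s * y@_t *g (s, t) >>.

Definition Delta_basis (t : TopT) : HT2 :=
  \sum_(O in opens t) << (std_restr t (~: O), std_restr t O) >>.
Definition Delta (x : HT) : HT2 :=
  \sum_(s <- msupp x) x@_s *: Delta_basis s.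

Definition theta (q : K) (x : HT) : HT :=
  \sum_(s <- msupp x) x@_s *: (q ^+ cT s *: << tbar s >>).

Definition theta2 (q : K) (z : HT2) : HT2 :=
  \sum_(p <- msupp z) z@_p *: htens (theta q << p.1 >>) (theta q << p.2 >>).
End Algebra.
Arguments in_HSP {K}.
Arguments hdot {K}.
Arguments hdown {K}.
Arguments htens {K}.
Arguments Delta {K}.
Arguments theta {K}.
Arguments theta2 {K}.

(* Main.v *)
Require Import Defs.
From HB Require Import structures.
From mathcomp Require Import all_boot all_order all_algebra.
From mathcomp Require Import finmap.
From mathcomp.multinomials Require Import monalg.
From mathcomp Require Import zify.
From Stdlib Require Import FunctionalExtensionality.
Set Implicit Arguments. Unset Strict Implicit. Unset Printing Implicit Defensive.

Definition up n (r : rel 'I_n) : {set {set 'I_n}} :=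
  [set I : {set 'I_n} | [forall a, forall b, ((a \in I) && r a b) ==> (b \in I)]].
Definition of_rel n (r : rel 'I_n) : TopT := @mkT n (up r).
Arguments mk_top : simpl never.

Lemma upP n (r : rel 'I_n) (I : {set 'I_n}) :
  reflect (forall a b, a \in I -> r a b -> b \in I) (I \in up r).
Proof.
rewrite inE; apply: (iffP forallP) => [H a b aI rab|H a].
  by have /forallP/(_ b)/implyP := H a; apply; rewrite aI.
by apply/forallP=> b; apply/implyP=> /andP[]; apply: H.
Qed.

Lemma up_top n (r : rel 'I_n) : is_topology (up r).
Proof.
apply/and4P; split.
- by apply/upP=> a b; rewrite inE.
- by apply/upP=> a b; rewrite !inE.
- apply/forall_inP=> O1 /upP H1; apply/forall_inP=> O2 /upP H2.
  apply/upP=> a b; rewrite !inE => /orP[aO|aO] rab.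
    by rewrite (H1 a b).
  by rewrite (H2 a b) ?orbT.
- apply/forall_inP=> O1 /upP H1; apply/forall_inP=> O2 /upP H2.
  apply/upP=> a b; rewrite !inE => /andP[aO1 aO2] rab.
  by rewrite (H1 a b) // (H2 a b).
Qed.

Lemma opens_mkT n (F : {set {set 'I_n}}) : is_topology F -> opens (@mkT n F) = F.
Proof. move=> hF; rewrite /opens /mkT /mk_top /=.
destruct (boolP (is_topology F)) as [h|h] => //. by rewrite hF in h. Qed.

Lemma opens_of_rel n (r : rel 'I_n) : opens (of_rel r) = up r.
Proof. exact: opens_mkT (up_top r). Qed.

Definition preord n (r : rel 'I_n) := reflexive r /\ transitive r.

Lemma tle_of_rel n (r : rel 'I_n) : preord r -> tle (of_rel r) = r.
Proof.
move=> [rr rt]; apply: functional_extensionality => i;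
apply: functional_extensionality => j.
rewrite /tle opens_of_rel; apply/forall_inP/idP => [H|rij O /upP HO].
  have := H [set k | r i k].
  have -> : [set k | r i k] \in up r.
    by apply/upP=> a b; rewrite !inE => ria rab; apply: rt rab.
  by move=> /(_ isT); rewrite !inE rr.
by apply/implyP=> iO; apply: HO rij.
Qed.

Lemma tle_refl t : reflexive (tle t).
Proof. by move=> i; apply/forall_inP=> O _; apply/implyP. Qed.
Lemma tle_trans t : transitive (tle t).
Proof.
move=> j i k /forall_inP H1 /forall_inP H2; apply/forall_inP=> O HO.
by apply/implyP=> /(implyP (H1 O HO)) /(implyP (H2 O HO)).
Qed.
Lemma tle_preord t : preord (tle t).
Proof. by split; [apply: tle_refl | apply: tle_trans]. Qed.

Lemma top_props n (F : {set {set 'I_n}}) : is_topology F ->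
  [/\ set0 \in F, setT \in F,
     (forall O1 O2, O1 \in F -> O2 \in F -> O1 :|: O2 \in F) &
     (forall O1 O2, O1 \in F -> O2 \in F -> O1 :&: O2 \in F)].
Proof.
case/and4P=> h0 hT /forall_inP hU /forall_inP hI; split => // O1 O2 h1 h2.
  by have /forall_inP := hU O1 h1; apply.
by have /forall_inP := hI O1 h1; apply.
Qed.

Lemma opens_up t : opens t = up (tle t).
Proof.
have [h0 hT hU hI] := top_props (valP (tagged t)).
apply/setP=> X; apply/idP/upP => [XO a b aX /forall_inP/(_ X XO)/implyP|HX].
  by apply.
pose U i := \bigcap_(O in opens t | i \in O) O.
have UO i : U i \in opens t.
  by apply: (big_ind (fun Y => Y \in opens t)) => // O /andP[].
have -> : X = \bigcup_(i in X) U i.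
  apply/setP=> j; apply/idP/bigcupP => [jX|[i iX]].
    exists j => //; apply/bigcapP=> O /andP[].
    done.
  move/bigcapP=> H; apply: (HX i) => //; apply/forall_inP=> O OO.
  by apply/implyP=> iO; apply: H; rewrite OO.
by apply: (big_ind (fun Y => Y \in opens t)).
Qed.

Lemma top_eq t : t = of_rel (tle t).
Proof.
case: t => n [F hF]; rewrite /of_rel /mkT /=; congr (Tagged _ _).
apply: val_inj => /=.
have E := opens_up (existT _ n (exist _ F hF)); rewrite /= in E.
rewrite -E; exact/esym/(opens_mkT hF).
Qed.

Definition glue m n (c : bool) (r : rel 'I_m) (r' : rel 'I_n) : rel 'I_(m + n) :=
  fun x y => match split x, split y with
  | inl i, inl j => r i j
  | inr i, inr j => r' i j
  | inl _, inr _ => c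
  | inr _, inl _ => false end.

Lemma splitL m n (i : 'I_m) : split (lshift n i) = inl i.
Proof. exact: (unsplitK (inl i)). Qed.
Lemma splitR m n (j : 'I_n) : split (rshift m j) = inr j.
Proof. exact: (unsplitK (inr j)). Qed.

Lemma lshift_rshift m n (i : 'I_m) (j : 'I_n) : (lshift n i == rshift m j) = false.
Proof. apply/eqP=> /(congr1 val) /= E; have := ltn_ord i; rewrite E; by rewrite ltnNge leq_addr. Qed.

Lemma memLL m n (O : {pred 'I_m}) (i : 'I_m) :
  (lshift n i \in [set lshift n x | x in O]) = (i \in O).
Proof. by rewrite mem_imset //; apply: lshift_inj. Qed.
Lemma memRR m n (O : {pred 'I_n}) (j : 'I_n) :
  (rshift m j \in [set rshift m x | x in O]) = (j \in O).
Proof. by rewrite mem_imset //; apply: rshift_inj. Qed.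
Lemma memLR m n (O : {pred 'I_m}) (j : 'I_n) :
  (rshift m j \in [set lshift n x | x in O]) = false.
Proof. by apply/imsetP=> [[x _ /eqP]]; rewrite eq_sym lshift_rshift. Qed.
Lemma memRL m n (O : {pred 'I_n}) (i : 'I_m) :
  (lshift n i \in [set rshift m x | x in O]) = false.
Proof. by apply/imsetP=> [[x _ /eqP]]; rewrite lshift_rshift. Qed.

Definition memLRE := (memLL, memRR, memLR, memRL, splitL, splitR).

Lemma ord_split m n (P : 'I_(m + n) -> Prop) :
  (forall i, P (lshift n i)) -> (forall j, P (rshift m j)) -> forall x, P x.
Proof. by move=> HL HR x; rewrite -(splitK x); case: (split x). Qed.

Lemma glue_preord m n c (r : rel 'I_m) (r' : rel 'I_n) :
  preord r -> preord r' -> preord (glue c r r').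
Proof.
move=> [rr rt] [rr' rt']; split.
  by apply: ord_split => i; rewrite /glue memLRE.
move=> y x z; move: x y z.
apply: ord_split => i; apply: ord_split => j; apply: ord_split => k.
all: rewrite /glue ?memLRE //.
- exact: rt.
- exact: rt'.
Qed.

Lemma tdot_eq s t : tdot s t = of_rel (glue false (tle s) (tle t)).
Proof.
rewrite /tdot /of_rel; congr mkT; rewrite !opens_up.
apply/setP=> X; apply/imset2P/upP.
- case=> O O' /upP HO /upP HO' ->.
  apply: ord_split => i; apply: ord_split => j; rewrite /glue !inE !memLRE ?orbF //=.
  + exact: HO.
  + exact: HO'.
- move=> HX; exists (lshift (tag t) @^-1: X) (@rshift (tag s) (tag t) @^-1: X).
  + apply/upP=> a b; rewrite !inE => aX rab; apply: HX aX _.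
    by rewrite /glue !memLRE.
  + apply/upP=> a b; rewrite !inE => aX rab; apply: HX aX _.
    by rewrite /glue !memLRE.
  + apply/setP; apply: ord_split => i; rewrite !inE.
    + by rewrite memLL memRL inE orbF.
    + by rewrite memLR memRR inE.

Qed.

Lemma tdown_eq s t : tdown s t = of_rel (glue true (tle s) (tle t)).
Proof.
rewrite /tdown /of_rel; congr mkT; rewrite !opens_up.
apply/setP=> X; rewrite inE; apply/orP/upP.
- case=> /imsetP [O /upP HO ->].
    apply: ord_split => i; apply: ord_split => j; rewrite /glue !inE ?splitL ?splitR.
    + rewrite !memLL !memRL !orbF; exact: HO.
    + by move=> *; rewrite !memRR orbT.
    + by move=> _.
    + by move=> *; rewrite !memRR orbT.
  apply: ord_split => i; apply: ord_split => j; rewrite /glue ?splitL ?splitR.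
  + by move=> H; rewrite memRL in H.
  + by move=> H; rewrite memRL in H.
  + by move=> _.
  + rewrite !memRR; exact: HO.
- move=> HX.
  case: (pickP (fun i => lshift (tag t) i \in X)) => [i0 i0X|noL].
    left; apply/imsetP; exists (lshift (tag t) @^-1: X).
      apply/upP=> a b; rewrite !inE => aX rab; apply: HX aX _.
      by rewrite /glue !splitL.
    apply/setP=> x; move: x; apply: ord_split => i; rewrite !inE.
      by rewrite memLL memRL inE orbF.
    rewrite memLR memRR /=.
    by apply: HX i0X _; rewrite /glue splitL splitR.
  right; apply/imsetP; exists (@rshift (tag s) (tag t) @^-1: X).
    apply/upP=> a b; rewrite !inE => aX rab; apply: HX aX _.
    by rewrite /glue !splitR.
  apply/setP=> x; move: x; apply: ord_split => i.
    by rewrite memRL noL.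
  by rewrite memRR inE.
Qed.

Lemma of_rel_cast n m (e : n = m) (r : rel 'I_n) (r' : rel 'I_m) :
  (forall i j, r i j = r' (cast_ord e i) (cast_ord e j)) -> of_rel r = of_rel r'.
Proof.
case: m / e r' => r' H.
have -> : r = r'; last by [].
apply: functional_extensionality => i; apply: functional_extensionality => j.
by rewrite H !cast_ord_id.
Qed.

Lemma of_rel_ext n (r r' : rel 'I_n) : r =2 r' -> of_rel r = of_rel r'.
Proof. by move=> H; apply: (@of_rel_cast n n (erefl n)) => i j; rewrite !cast_ord_id. Qed.

Lemma enum_val_lt n (A : {set 'I_n}) (a b : 'I_#|A|) :
  (a < b)%N -> (enum_val a < enum_val b)%N.
Proof.
move=> ab; rewrite (enum_val_nth (enum_val a)) (enum_val_nth (enum_val a) b).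
have S : sorted (fun x y : 'I_n => (x < y)%N) (enum A).
  have -> : enum A = filter (mem A) (enum 'I_n) by rewrite enumT.
  apply: sorted_filter; first by move=> x y z; apply: ltn_trans.
  by have := iota_ltn_sorted 0 n; rewrite -val_enum_ord sorted_map.
apply: (sorted_ltn_nth _ _ S) => //; first by move=> x y z; apply: ltn_trans.
  by rewrite inE -cardE.
by rewrite inE -cardE.
Qed.

Definition rank n (A : {set 'I_n}) (x : 'I_n) := #|[set y in A | (y < x)%N]|.

Lemma card_lt m (i : nat) : (i <= m)%N -> #|[set j : 'I_m | (j < i)%N]| = i.
Proof.
move=> im.
have -> : [set j : 'I_m | (j < i)%N] = widen_ord im @: [set: 'I_i].
  apply/setP=> x; rewrite inE; apply/idP/imsetP => [xi|[y _ ->]] /=.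
    by exists (Ordinal xi); rewrite ?inE //; apply: val_inj.
  exact: ltn_ord.
by rewrite card_imset ?cardsT ?card_ord //; by move=> x y /(congr1 val) /= /val_inj.
Qed.

Section Incr.
Variables (n m : nat) (f : 'I_m -> 'I_n).
Hypothesis hf : forall i j : 'I_m, (i < j)%N -> (f i < f j)%N.

Lemma incr_mono (i j : 'I_m) : (f i < f j)%N = (i < j)%N.
Proof.
case: (ltngtP i j) => [/hf -> //|/hf|/val_inj ->]; last by rewrite ltnn.
by move=> H; apply/negbTE; rewrite -leqNgt ltnW.
Qed.

Lemma incr_inj : injective f.
Proof.
move=> i j E; apply/val_inj; case: (ltngtP i j) => // /hf; by rewrite E ltnn.
Qed.

Lemma rank_incr (i : 'I_m) : rank (f @: setT) (f i) = i.
Proof.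
rewrite /rank.
have -> : [set y in f @: setT | (y < f i)%N] = f @: [set j : 'I_m | (j < i)%N].
  apply/setP=> y; rewrite inE; apply/andP/imsetP => [[/imsetP [j _ ->]]|[j]].
    by rewrite incr_mono => ji; exists j; rewrite ?inE.
  rewrite inE => ji ->; split; first by apply: imset_f.
  by rewrite incr_mono.
by rewrite card_imset ?card_lt ?(ltnW (ltn_ord i)) //; apply: incr_inj.
Qed.
End Incr.

Lemma rank_inj n (A : {set 'I_n}) (x y : 'I_n) : x \in A -> y \in A -> rank A x = rank A y -> x = y.
Proof.
have H : forall x y : 'I_n, x \in A -> (x < y)%N -> (rank A x < rank A y)%N.
  move=> u v uA uv; apply: proper_card; apply/properP; split.
    apply/subsetP=> z; rewrite !inE => /andP[-> zu]; by rewrite (ltn_trans zu).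
  by exists u; rewrite !inE ?uA ?uv // ltnn.
move=> xA yA E; apply: val_inj; case: (ltngtP x y) => // [/(H _ _ xA)|/(H _ _ yA)];
  by rewrite E ltnn.
Qed.

Lemma enum_val_img n (A : {set 'I_n}) : A = (@enum_val _ (mem A)) @: setT.
Proof.
apply/setP=> x; apply/idP/imsetP => [xA|[a _ ->]]; last exact: enum_valP.
by exists (enum_rank_in xA x); rewrite ?enum_rankK_in.
Qed.

Lemma rank_enum_val n (A : {set 'I_n}) (a : 'I_#|A|) : rank A (enum_val a) = a.
Proof.
have := rank_incr (@enum_val_lt n A) a; by rewrite -enum_val_img.
Qed.

Lemma transport n (A : {set 'I_n}) m (f : 'I_m -> 'I_n) (r : rel 'I_n) :
  (forall i j : 'I_m, (i < j)%N -> (f i < f j)%N) -> A = f @: setT ->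
  of_rel (fun a b : 'I_#|A| => r (enum_val a) (enum_val b)) = of_rel (fun i j => r (f i) (f j)).
Proof.
move=> hf EA.
have e : #|A| = m by rewrite EA card_imset ?cardsT ?card_ord //; apply: incr_inj.
refine (@of_rel_cast _ _ e _ _ _) => i j.
suff Hv : forall a : 'I_#|A|, enum_val a = f (cast_ord e a) by rewrite !Hv.
move=> a; apply: (rank_inj (A := A)); first exact: enum_valP.
  have : f (cast_ord e a) \in f @: setT by apply: imset_f.
  by rewrite -EA.
have := rank_incr hf (cast_ord e a); rewrite -EA => ->.
by rewrite rank_enum_val.
Qed.

Definition mins n (r : rel 'I_n) : {set 'I_n} :=
  [set i | [forall j, (r i j && r j i) ==> (i <= j)%N]].
Definition bar n (r : rel 'I_n) : TopT :=
  of_rel (fun a b : 'I_#|mins r| => r (enum_val a) (enum_val b)).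

Lemma tbar_eq t : tbar t = bar (tle t).
Proof. by []. Qed.

Lemma tbar_of_rel n (r : rel 'I_n) : preord r -> tbar (of_rel r) = bar r.
Proof. move=> h. rewrite tbar_eq tle_of_rel. reflexivity. exact h. Qed.

Lemma cT_of_rel n (r : rel 'I_n) : preord r -> cT (of_rel r) = (n - #|mins r|)%N.
Proof. move=> h; rewrite /cT /nclasses /class_mins /tequiv. rewrite tle_of_rel //. Qed.

Lemma preord_comp n m (f : 'I_m -> 'I_n) (r : rel 'I_n) :
  preord r -> preord (fun i j => r (f i) (f j)).
Proof. by case=> rr rt; split => [i|j i k]; [apply: rr | apply: rt]. Qed.

Lemma tle_bar n (r : rel 'I_n) : preord r ->
  tle (bar r) = (fun a b : 'I_#|mins r| => r (enum_val a) (enum_val b)).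
Proof. by move=> h; rewrite /bar tle_of_rel //; apply: preord_comp. Qed.

Lemma minsP n (r : rel 'I_n) i :
  reflect (forall j, r i j -> r j i -> (i <= j)%N) (i \in mins r).
Proof.
rewrite inE; apply: (iffP forallP) => [H j rij rji|H j].
  by have /implyP := H j; apply; rewrite rij.
by apply/implyP=> /andP[]; apply: H.
Qed.

Lemma min_exists n (r : rel 'I_n) : preord r ->
  forall y, exists2 m, m \in mins r & r y m && r m y.
Proof.
case=> rr rt y.
case: (@arg_minnP _ y (fun j => r y j && r j y) val); first by rewrite rr.
move=> m /andP[rym rmy] Hm; exists m; last by rewrite rym.
apply/minsP=> j rmj rjm; apply: Hm.
by rewrite (rt _ _ _ rym rmj) (rt _ _ _ rjm rmy).
Qed.

Lemma enum_val_le n (A : {set 'I_n}) (a b : 'I_#|A|) :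
  (enum_val a <= enum_val b)%N = (a <= b)%N.
Proof. by rewrite leqNgt (incr_mono (@enum_val_lt n A)) -leqNgt. Qed.

Lemma restr_up n (r : rel 'I_n) (Y : {set 'I_n}) : preord r ->
  [set [set i : 'I_#|Y| | enum_val i \in O] | O : {set 'I_n} in up r] =
  up (fun a b : 'I_#|Y| => r (enum_val a) (enum_val b)).
Proof.
case=> rr rt; apply/setP=> J; apply/imsetP/upP.
  case=> O /upP HO ->{J} a b; rewrite !inE => aO rab; exact: HO aO rab.
move=> HJ; exists [set y | [exists a in J, r (enum_val a) y]].
  apply/upP=> x y; rewrite !inE => /exists_inP [a aJ rax] rxy.
  by apply/exists_inP; exists a => //; apply: rt rxy.
apply/setP=> i; rewrite !inE; apply/idP/exists_inP => [iJ|[a aJ rai]].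
  by exists i.
exact: HJ aJ rai.
Qed.

Lemma std_eq t Y : std_restr t Y =
  of_rel (fun a b : 'I_#|Y| => tle t (enum_val a) (enum_val b)).
Proof.
by rewrite /std_restr /of_rel opens_up restr_up //; apply: tle_preord.
Qed.

Lemma T0_of_rel n (r : rel 'I_n) : preord r ->
  T0 (of_rel r) = [forall i, forall j, (r i j && r j i) ==> (i == j)].
Proof. by move=> h; rewrite /T0 /tequiv tle_of_rel. Qed.

Lemma T0_bar t : T0 (tbar t).
Proof.
have hr := tle_preord t.
rewrite tbar_eq /bar T0_of_rel; last exact: preord_comp.
apply/forallP=> a; apply/forallP=> b; apply/implyP=> /andP[rab rba].
have Ha : enum_val a \in mins (tle t) := enum_valP a.
have Hb : enum_val b \in mins (tle t) := enum_valP b.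
move/minsP: Ha => Ha; move/minsP: Hb => Hb.
apply/eqP; apply: enum_val_inj; apply: val_inj; apply/eqP.
by rewrite eqn_leq Ha // Hb.
Qed.

Lemma bar_T0 t : T0 t -> tbar t = t /\ cT t = 0%N.
Proof.
move=> /forallP H.
have EM : mins (tle t) = id @: setT.
  apply/setP=> i; rewrite imset_id in_setT; apply/minsP=> j rij rji.
  by have /forallP/(_ j)/implyP := H i; rewrite /tequiv rij rji => /(_ isT)/eqP ->.
split.
  rewrite tbar_eq /bar (@transport _ _ _ id (tle t) (fun i j h => h) EM).
  exact: esym (top_eq t).
rewrite /cT /nclasses /class_mins.
have -> : #|[set i | [forall j, tequiv t i j ==> (i <= j)%N]]| = #|mins (tle t)| by [].
by rewrite EM imset_id cardsT card_ord subnn.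
Qed.

Section Glue.
Variables (m n : nat) (c : bool) (r : rel 'I_m) (r' : rel 'I_n).
Hypotheses (hr : preord r) (hr' : preord r').

Definition gf (x : 'I_(#|mins r| + #|mins r'|)) : 'I_(m + n) :=
  match split x with
  | inl a => lshift n (enum_val a)
  | inr b => rshift m (enum_val b) end.

Lemma gfL a : gf (lshift _ a) = lshift n (enum_val a).
Proof. by rewrite /gf splitL. Qed.
Lemma gfR b : gf (rshift _ b) = rshift m (enum_val b).
Proof. by rewrite /gf splitR. Qed.

Lemma gf_incr : forall x y : 'I_(#|mins r| + #|mins r'|), (x < y)%N -> (gf x < gf y)%N.
Proof.
apply: ord_split => a; apply: ord_split => b; rewrite ?gfL ?gfR /=.
- exact: enum_val_lt.
- move=> _; exact: (leq_trans (ltn_ord (enum_val a)) (leq_addr _ _)).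
- move=> h; exfalso; have := ltn_ord b; rewrite ltnNge; move/negP; apply; exact: leq_trans (leq_addr _ _) (ltnW h).
- move=> h; rewrite ltn_add2l; apply: enum_val_lt; by rewrite ltn_add2l in h.
Qed.

Lemma minsL c0 i : (lshift n i \in mins (glue c0 r r')) = (i \in mins r).
Proof.
apply/minsP/minsP => H j.
  by move=> rij rji; have := H (lshift n j); rewrite /glue !splitL /=; apply.
move: j; apply: ord_split => j; rewrite /glue !splitL ?splitR //= => rij rji.
exact: H.
Qed.

Lemma minsR c0 j : (rshift m j \in mins (glue c0 r r')) = (j \in mins r').
Proof.
apply/minsP/minsP => H k.
  move=> rjk rkj; have := H (rshift m k); rewrite /glue !splitR /= leq_add2l; apply => //.
move: k; apply: ord_split => k; rewrite /glue !splitR ?splitL //= => rjk rkj.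
by rewrite leq_add2l; apply: H.
Qed.

Lemma mins_glue : mins (glue c r r') = gf @: setT.
Proof.
apply/setP; apply: ord_split => i.
  rewrite minsL; apply/idP/imsetP => [iM|[x _]].
    by exists (lshift _ (enum_rank_in iM i)); rewrite ?gfL ?enum_rankK_in.
  move: x; apply: ord_split => a; rewrite ?gfL ?gfR.
    by move=> /lshift_inj ->; apply: enum_valP.
  by move/eqP; rewrite lshift_rshift.
rewrite minsR; apply/idP/imsetP => [iM|[x _]].
  by exists (rshift _ (enum_rank_in iM i)); rewrite ?gfR ?enum_rankK_in.
move: x; apply: ord_split => a; rewrite ?gfL ?gfR.
  by move/eqP; rewrite eq_sym lshift_rshift.
by move=> /rshift_inj ->; apply: enum_valP.
Qed.

Lemma bar_glue :
  bar (glue c r r') = of_rel (glue c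
     (fun a b : 'I_#|mins r| => r (enum_val a) (enum_val b))
     (fun a b : 'I_#|mins r'| => r' (enum_val a) (enum_val b))).
Proof.
rewrite /bar (@transport _ _ _ _ (glue c r r') gf_incr mins_glue); apply: of_rel_ext.
apply: ord_split => a; apply: ord_split => b;
  by rewrite /glue ?gfL ?gfR ?splitL ?splitR.
Qed.

Lemma card_mins_glue : #|mins (glue c r r')| = (#|mins r| + #|mins r'|)%N.
Proof.
by rewrite mins_glue card_imset ?cardsT ?card_ord //; apply: incr_inj gf_incr.
Qed.
End Glue.

Lemma card_le n (A : {set 'I_n}) : (#|A| <= n)%N.
Proof. by have := max_card A; rewrite card_ord. Qed.

Lemma cT_eq t : cT t = (tag t - #|mins (tle t)|)%N.
Proof. by []. Qed.

Lemma tbar_glue c s t :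
  tbar (of_rel (glue c (tle s) (tle t))) = of_rel (glue c (tle (tbar s)) (tle (tbar t))) /\
  cT (of_rel (glue c (tle s) (tle t))) = (cT s + cT t)%N.
Proof.
have hs := tle_preord s; have ht := tle_preord t.
have hg := glue_preord c hs ht.
split.
  rewrite tbar_of_rel; last exact: hg.
  rewrite bar_glue; try assumption.
  rewrite !tbar_eq tle_bar; last exact: hs.
  rewrite tle_bar; last exact: ht.
  reflexivity.
rewrite cT_of_rel; last exact: hg.
rewrite card_mins_glue; try assumption.
rewrite !cT_eq.
have := card_le (mins (tle s)); have := card_le (mins (tle t)); lia.
Qed.

Lemma tbar_tdot s t :
  tbar (tdot s t) = tdot (tbar s) (tbar t) /\ cT (tdot s t) = (cT s + cT t)%N.
Proof. by rewrite !tdot_eq; apply: tbar_glue. Qed.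

Lemma tbar_tdown s t :
  tbar (tdown s t) = tdown (tbar s) (tbar t) /\ cT (tdown s t) = (cT s + cT t)%N.
Proof. by rewrite !tdown_eq; apply: tbar_glue. Qed.

Definition sim_closed n (r : rel 'I_n) (Y : {set 'I_n}) :=
  forall x y, x \in Y -> r x y -> r y x -> y \in Y.

Lemma up_closed n (r : rel 'I_n) O : O \in up r -> sim_closed r O.
Proof. by move=> /upP H x y xO rxy _; apply: H xO rxy. Qed.

Lemma upC_closed n (r : rel 'I_n) O : O \in up r -> sim_closed r (~: O).
Proof.
move=> /upP H x y; rewrite !inE => xO _ ryx; apply/negP=> yO.
by move/negP: xO; apply; apply: H yO ryx.
Qed.

Lemma mins_restr n (r : rel 'I_n) (Y : {set 'I_n}) : preord r -> sim_closed r Y ->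
  mins r :&: Y =
  (@enum_val _ (mem Y)) @: mins (fun a b : 'I_#|Y| => r (enum_val a) (enum_val b)).
Proof.
move=> hr hY; apply/setP=> y; rewrite inE; apply/andP/imsetP.
  case=> /minsP yM yY; exists (enum_rank_in yY y); last by rewrite enum_rankK_in.
  apply/minsP=> b; rewrite enum_rankK_in // => ryb rby.
  by rewrite -(enum_val_le (A := Y)) enum_rankK_in //; apply: yM.
case=> a /minsP aM ->; split; last exact: enum_valP.
apply/minsP=> j raj rja.
have jY : j \in Y by apply: hY (enum_valP a) raj rja.
have := aM (enum_rank_in jY j); rewrite enum_rankK_in // => /(_ raj rja).
by rewrite -(enum_val_le (A := Y)) enum_rankK_in.
Qed.

Section Delta.
Variable s : TopT.
Let r := tle s.
Let hr : preord r := tle_preord s.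
Let M := mins r.

Lemma img_preim (Y : {set 'I_(tag s)}) :
  M :&: Y = (@enum_val _ (mem M)) @: [set a : 'I_#|M| | enum_val a \in Y].
Proof.
apply/setP=> y; rewrite inE; apply/andP/imsetP.
  case=> yM yY; exists (enum_rank_in yM y); last by rewrite enum_rankK_in.
  by rewrite inE enum_rankK_in.
by case=> a; rewrite inE => aY ->; split => //; apply: enum_valP.
Qed.

Lemma std_bar (Y : {set 'I_(tag s)}) : sim_closed r Y ->
  std_restr (tbar s) [set a : 'I_#|M| | enum_val a \in Y] = tbar (std_restr s Y).
Proof.
move=> hY.
set P := [set a : 'I_#|M| | enum_val a \in Y].
have h1 : forall i j : 'I_#|P|, (i < j)%N ->
    ((@enum_val _ (mem M)) (enum_val i) < (@enum_val _ (mem M)) (enum_val j))%N.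
  by move=> i j ij; apply: enum_val_lt; apply: enum_val_lt.
have E1 : M :&: Y = (fun i : 'I_#|P| => (@enum_val _ (mem M)) (enum_val i)) @: setT.
  by rewrite img_preim imset_comp -enum_val_img.
have hY' := preord_comp (@enum_val _ (mem Y)) hr.
set MY := mins (fun a b : 'I_#|Y| => r (enum_val a) (enum_val b)).
have h2 : forall i j : 'I_#|MY|, (i < j)%N ->
    ((@enum_val _ (mem Y)) (enum_val i) < (@enum_val _ (mem Y)) (enum_val j))%N.
  by move=> i j ij; apply: enum_val_lt; apply: enum_val_lt.
have E2 : M :&: Y = (fun i : 'I_#|MY| => (@enum_val _ (mem Y)) (enum_val i)) @: setT.
  by rewrite (mins_restr hr hY) imset_comp -enum_val_img.
rewrite std_eq (tle_bar hr).
rewrite std_eq tbar_of_rel; last exact: hY'.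
rewrite /bar.
rewrite -(@transport _ _ _ _ r h1 E1).
rewrite -(@transport _ _ _ _ r h2 E2).
reflexivity.
Qed.

Lemma card_mins_std (Y : {set 'I_(tag s)}) : sim_closed r Y ->
  #|mins (fun a b : 'I_#|Y| => r (enum_val a) (enum_val b))| = #|M :&: Y|.
Proof.
move=> hY; rewrite (mins_restr hr hY) card_imset //; exact: enum_val_inj.
Qed.

Lemma cT_std (O : {set 'I_(tag s)}) : O \in up r ->
  (cT (std_restr s (~: O)) + cT (std_restr s O))%N = cT s.
Proof.
move=> hO.
rewrite !std_eq !cT_of_rel; try exact: preord_comp.
rewrite (card_mins_std (upC_closed hO)) (card_mins_std (up_closed hO)) cT_eq.
have := cardsC O; have := cardsID O M; rewrite setDE card_ord.
have := subset_leq_card (subsetIr M O).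
have := subset_leq_card (subsetIr M (~: O)).
rewrite -/M -/r.
lia.
Qed.

Lemma preim_inj : {in up r &, injective (fun O : {set 'I_(tag s)} =>
   [set a : 'I_#|M| | enum_val a \in O])}.
Proof.
suff H : forall O, O \in up r -> forall y, (y \in O) =
    [exists a, ((a \in [set a : 'I_#|M| | enum_val a \in O]) && r (enum_val a) y)].
  by move=> O1 O2 h1 h2 E; apply/setP=> y; rewrite (H _ h1) (H _ h2) E.
move=> O /upP hO y; apply/idP/existsP => [yO|[a /andP[]]].
  have [m mM /andP[rym rmy]] := min_exists hr y.
  exists (enum_rank_in mM m); rewrite inE !enum_rankK_in // rmy andbT.
  exact: hO yO rym.
by rewrite inE => aO ray; apply: hO aO ray.
Qed.

Lemma Delta_comb (V : nmodType) (F : TopT * TopT -> V) :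
  (\sum_(P in opens (tbar s)) F (std_restr (tbar s) (~: P), std_restr (tbar s) P) =
  \sum_(O in opens s) F (tbar (std_restr s (~: O)), tbar (std_restr s O)))%R.
Proof.
have -> : opens (tbar s) = [set [set a : 'I_#|M| | enum_val a \in O] | O : {set 'I_(tag s)} in up r].
  rewrite restr_up; last exact: hr.
  exact: opens_of_rel.
rewrite big_imset /=; last exact: preim_inj.
rewrite opens_up; apply: eq_bigr => O hO.
have -> : ~: [set a : 'I_#|M| | enum_val a \in O] = [set a : 'I_#|M| | enum_val a \in ~: O].
  by apply/setP=> a; rewrite !inE.
by rewrite !std_bar //; [apply: up_closed | apply: upC_closed].
Qed.
End Delta.

Import GRing.Theory.
Local Open Scope ring_scope.

Section Lin.
Variables (K : fieldType) (T : choiceType) (V : lmodType K).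

Definition lin (F : T -> V) (x : {malg K[T]}) : V :=
  \sum_(s <- msupp x) x@_s *: F s.

Lemma linEw F (d : {fset T}) x : (msupp x `<=` d)%fset ->
  lin F x = \sum_(k <- d) x@_k *: F k.
Proof.
move=> le; rewrite /lin (big_fset_incl _ le) //= => k _ /mcoeff_outdom ->.
by rewrite scale0r.
Qed.

Lemma linD F x y : lin F (x + y) = lin F x + lin F y.
Proof.
set d := (msupp x `|` msupp y)%fset.
rewrite (@linEw F d (x + y)); last exact: msuppD_le.
rewrite (@linEw F d x); last exact: fsubsetUl.
rewrite (@linEw F d y); last exact: fsubsetUr.
by rewrite -big_split; apply: eq_bigr => k _; rewrite mcoeffD scalerDl.
Qed.

Lemma linZ F c x : lin F (c *: x) = c *: lin F x.
Proof.
rewrite (@linEw F (msupp x) (c *: x)); last exact: msuppZ_le.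
rewrite /lin scaler_sumr; apply: eq_bigr => k _.
by rewrite mcoeffZ scalerA.
Qed.

Lemma lin0 F : lin F 0 = 0.
Proof. by rewrite /lin msupp0 big_seq_fset0. Qed.

Lemma linU F c k : lin F << c *g k >> = c *: F k.
Proof. by rewrite (linEw _ msuppU_le) big_seq_fset1 mcoeffUU. Qed.

Lemma linU1 F k : lin F << k >> = F k.
Proof. by rewrite linU scale1r. Qed.

Lemma lin_sum F (I : Type) (l : seq I) (P : pred I) (G : I -> {malg K[T]}) :
  lin F (\sum_(i <- l | P i) G i) = \sum_(i <- l | P i) lin F (G i).
Proof.
elim: l => [|i l IH]; first by rewrite !big_nil lin0.
by rewrite !big_cons; case: (P i); rewrite ?linD IH.
Qed.

Lemma lin_ext F1 F2 x : F1 =1 F2 -> lin F1 x = lin F2 x.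
Proof. by move=> E; apply: eq_bigr => k _; rewrite E. Qed.

Lemma lin_Fscale F c x : lin (fun t => c *: F t) x = c *: lin F x.
Proof. rewrite /lin scaler_sumr; apply: eq_bigr => k _; by rewrite !scalerA mulrC. Qed.

Lemma monalgZU (c : K) (k : T) : << c *g k >> = c *: << k >>.
Proof.
apply/malgP=> k'; rewrite mcoeffZ !mcoeffU.
by case: (k == k'); rewrite ?mulr1 ?mulr0.
Qed.

End Lin.

Section Comp.
Variables (K : fieldType) (T U : choiceType) (V : lmodType K).

Lemma lin_comp (F : U -> V) (G : T -> {malg K[U]}) x :
  lin F (lin G x) = lin (fun s => lin F (G s)) x.
Proof.
have -> : lin G x = \sum_(s <- msupp x) x@_s *: G s by [].
rewrite lin_sum; apply: eq_bigr => s _; by rewrite linZ.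
Qed.

Lemma mcoeff_lin (F : T -> {malg K[U]}) x u :
  (lin F x)@_u = \sum_(s <- msupp x) x@_s * (F s)@_u.
Proof.
rewrite /lin (big_morph (mcoeff u) (mcoeffD u) (mcoeff0 u)).
apply: eq_bigr => s _; exact: mcoeffZ.
Qed.
Lemma lin_id (x : {malg K[T]}) : lin (fun k => << k >> : {malg K[T]}) x = x.
Proof.
rewrite [RHS]monalgE /lin; apply: eq_bigr => k _; by rewrite monalgZU.
Qed.

End Comp.

Import GRing.Theory.
Local Open Scope ring_scope.

Section Main.
Variables (K : fieldType) (q : K).

Definition thb (s : TopT) : HT K := q ^+ cT s *: << tbar s >>.

Lemma thetaE (x : HT K) : theta q x = lin thb x.
Proof. by []. Qed.


Lemma DeltaE (x : HT K) : Delta x = lin (@Delta_basis K) x.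
Proof. by []. Qed.

Lemma theta2E (z : HT2 K) : theta2 q z =
  lin (fun p : TopT * TopT => htens (theta q << p.1 >>) (theta q << p.2 >>)) z.
Proof. by []. Qed.

Lemma bilE (B : TopT -> TopT -> TopT) (x y : HT K) :
  \sum_(s <- msupp x) \sum_(t <- msupp y) << x@_s * y@_t *g B s t >> =
  lin (fun s => lin (fun t => << B s t >> : HT K) y) x.
Proof.
apply: eq_bigr => s _; rewrite /lin scaler_sumr; apply: eq_bigr => t _.
by rewrite monalgZU scalerA.
Qed.

Lemma hdotE (x y : HT K) : hdot x y = lin (fun s => lin (fun t => << tdot s t >> : HT K) y) x.
Proof. exact: bilE. Qed.
Lemma hdownE (x y : HT K) : hdown x y = lin (fun s => lin (fun t => << tdown s t >> : HT K) y) x.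
Proof. exact: bilE. Qed.
Lemma htensE (x y : HT K) : htens x y = lin (fun s => lin (fun t => << (s, t) >> : HT2 K) y) x.
Proof.
apply: eq_bigr => s _; rewrite /lin scaler_sumr; apply: eq_bigr => t _.
by rewrite monalgZU scalerA.
Qed.

Lemma T0_empty : T0 top_empty.
Proof. by apply/forallP => -[]. Qed.


Lemma morph_glue (op : TopT -> TopT -> TopT)
  (hop : forall s t, tbar (op s t) = op (tbar s) (tbar t) /\ cT (op s t) = (cT s + cT t)%N)
  (x y : HT K) :
  lin thb (lin (fun s => lin (fun t => << op s t >> : HT K) y) x) =
  lin (fun s => lin (fun t => << op s t >> : HT K) (lin thb y)) (lin thb x).
Proof.
rewrite lin_comp [RHS]lin_comp; apply: lin_ext => s.
rewrite lin_comp /thb linZ linU1 lin_comp -lin_Fscale; apply: lin_ext => t.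
rewrite linU1 linZ linU1 /thb; case: (hop s t) => -> ->.
by rewrite exprD scalerA.
Qed.

Lemma htens_basis (a b : K) u v :
  htens (a *: << u >> : HT K) (b *: << v >>) = (a * b) *: << (u, v) >>.
Proof.
rewrite htensE linZ linU1 -lin_Fscale linZ linU1.
rewrite scalerA mulrC; reflexivity.
Qed.

Lemma key (A B : TopT) (c : nat) : (cT A + cT B)%N = c ->
  htens (theta q << A >>) (theta q << B >>) = q ^+ c *: << (tbar A, tbar B) >>.
Proof.
move=> hc.
have eA : theta q << A >> = thb A := linU1 _ _.
have eB : theta q << B >> = thb B := linU1 _ _.
apply: etrans (congr2 htens eA eB) _.
rewrite /thb htens_basis -exprD hc.
reflexivity.
Qed.

Lemma Delta_basis_bar s :
  lin (fun p : TopT * TopT => htens (theta q << p.1 >>) (theta q << p.2 >>)) (Delta_basis K s)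
  = q ^+ cT s *: Delta_basis K (tbar s).
Proof.
rewrite /Delta_basis lin_sum scaler_sumr.
rewrite (Delta_comb s (fun p => q ^+ cT s *: (<< p >> : HT2 K))).
apply: eq_bigr => O hO; rewrite linU1.
change (htens (theta q << std_restr s (~: O) >>) (theta q << std_restr s O >>) =
  q ^+ cT s *: << (tbar (std_restr s (~: O)), tbar (std_restr s O)) >>).
rewrite opens_up in hO; have hc := cT_std hO.
move: (std_restr s (~: O)) (std_restr s O) hc => A B hc.
exact: key hc.
Qed.

Theorem main :
  (forall x : HT K, in_HSP (theta q x)) /\
  (forall y : HT K, in_HSP y -> exists x : HT K, theta q x = y) /\
  theta q << top_empty >> = << top_empty >> /\
  (forall x y : HT K, theta q (hdot x y) = hdot (theta q x) (theta q y)) /\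
  (forall x y : HT K, theta q (hdown x y) = hdown (theta q x) (theta q y)) /\
  (forall x : HT K, Delta (theta q x) = theta2 q (Delta x)).
Proof.
split.
  move=> x t; rewrite -mcoeff_neq0 thetaE mcoeff_lin; apply: contraR => nT0.
  rewrite big1 // => s _; rewrite /thb mcoeffZ mcoeffU.
  have -> : (tbar s == t) = false.
    by apply/negbTE; apply: contraNneq nT0 => <-; apply: T0_bar.
  by rewrite mulr0n mulr0 mulr0.
split.
  move=> y hy; exists y; rewrite thetaE -[RHS]lin_id.
  apply: eq_big_seq => s /hy hs.
  rewrite /thb; have [-> ->] := bar_T0 hs; rewrite expr0 scale1r.
  reflexivity.
split.
  rewrite thetaE linU1 /thb; have [-> ->] := bar_T0 T0_empty; rewrite expr0 scale1r.
  reflexivity.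
split.
  move=> x y; rewrite !hdotE !thetaE; apply: morph_glue; exact: tbar_tdot.
split.
  move=> x y; rewrite !hdownE !thetaE; apply: morph_glue; exact: tbar_tdown.
move=> x; rewrite DeltaE thetaE theta2E DeltaE !lin_comp; apply: lin_ext => s.
by rewrite /thb linZ linU1 Delta_basis_bar.
Qed.
End Main.

Unset Implicit Arguments.
Theorem proposition8 (K : fieldType) (q : K) :
  (forall x : HT K, in_HSP (theta q x)) /\
  (forall y : HT K, in_HSP y -> exists x : HT K, theta q x = y) /\
  theta q << top_empty >> = << top_empty >> /\
  (forall x y : HT K, theta q (hdot x y) = hdot (theta q x) (theta q y)) /\
  (forall x y : HT K, theta q (hdown x y) = hdown (theta q x) (theta q y)) /\
  (forall x : HT K, Delta (theta q x) = theta2 q (Delta x)).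
Proof. exact: (main q). Qed.
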